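(* Let $a,b,d>0$, let $c_-$ be the unique negative zero of $Q(x)=4ax^3-b^2x^2-18abd\,x+27a^2d^2+4db^3$, let $c^*=-\sqrt{3bd}$, and assume $c\in(c_-,c^* )$. Let $\phi(x)=\frac{ax^3+bx^2+cx+d}{x^3}$ ($x>0$), $x_m=\frac{-c-\sqrt{c^2-3bd}}{b}$, $x_M=\frac{-c+\sqrt{c^2-3bd}}{b}$, and $c_1^*=-2\sqrt{bd}$. \begin{description} \item[(a)] $c_-<c_1^*$. \item[(b)] $\phi(x_m)>a$ if and only if $c>c_1^*$. \item[(c)] Suppose $c>c_1^*$. Then there exists a unique number $\eta>x_M$ such that $\phi(\eta)=\phi(x_m)$, and $$\eta=\frac{-dx_m}{cx_m+2d}.$$ \end{description}
   Context: $x_m<x_M$ are the local minimum and local maximum points of $\phi$ on $(0,\infty)$. *)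

(* Defs.v *)
From Stdlib Require Import Reals.
Open Scope R_scope.

Definition Qpoly (a b d x : R) : R :=
  4 * a * x ^ 3 - b ^ 2 * x ^ 2 - 18 * a * b * d * x
  + 27 * a ^ 2 * d ^ 2 + 4 * d * b ^ 3.

Definition phi (a b c d x : R) : R :=
  (a * x ^ 3 + b * x ^ 2 + c * x + d) / x ^ 3.

Definition x_m (b c d : R) : R := (- c - sqrt (c ^ 2 - 3 * b * d)) / b.
Definition x_M (b c d : R) : R := (- c + sqrt (c ^ 2 - 3 * b * d)) / b.

(* Main.v *)
Require Import Defs.
From Stdlib Require Import Reals Lra Psatz.
Open Scope R_scope.

Lemma key a b c d x y : 0 < x -> 0 < y -> b*x^2+2*c*x+3*d = 0 ->
  (phi a b c d y - phi a b c d x) * (x^3*y^3) = -(y-x)^2 * ((b*x^2+c*x+d)*y - d*x).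
Proof.
  intros hx hy h.
  assert (hd : d = -(b*x^2+2*c*x)/3) by lra.
  subst d. unfold phi. field. split; lra.
Qed.

Lemma phi_sub a b c d x : 0 < x -> phi a b c d x - a = (b*x^2+c*x+d)/x^3.
Proof. intros hx. unfold phi. field. lra. Qed.

Theorem lemma3 (a b c d c_minus : R)
  (ha : 0 < a) (hb : 0 < b) (hd : 0 < d)
  (hcm_neg : c_minus < 0)
  (hcm_zero : Qpoly a b d c_minus = 0)
  (hcm_unique : forall x, x < 0 -> Qpoly a b d x = 0 -> x = c_minus)
  (hc_low : c_minus < c)
  (hc_up : c < - sqrt (3 * b * d)) :
  (* (a) *)
  c_minus < - 2 * sqrt (b * d) /\
  (* (b) *)
  (phi a b c d (x_m b c d) > a <-> c > - 2 * sqrt (b * d)) /\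
  (* (c) *)
  (c > - 2 * sqrt (b * d) ->
     exists eta,
       (x_M b c d < eta /\ phi a b c d eta = phi a b c d (x_m b c d)) /\
       (forall y, x_M b c d < y -> phi a b c d y = phi a b c d (x_m b c d) -> y = eta) /\
       eta = - d * x_m b c d / (c * x_m b c d + 2 * d)).
Proof.
  set (sb := sqrt (b*d)) in *.
  assert (hs : 0 < sb) by (apply sqrt_lt_R0; nra).
  assert (hs2 : sb*sb = b*d) by (apply sqrt_sqrt; nra).
  set (q := sqrt (3*b*d)) in *.
  assert (hq : 0 < q) by (apply sqrt_lt_R0; nra).
  assert (hq2 : q*q = 3*b*d) by (apply sqrt_sqrt; nra).
  assert (hc2 : c^2 > 3*b*d) by (assert (-c > q) by lra; nra).
  set (r := sqrt (c^2 - 3*b*d)) in *.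
  assert (hr : 0 < r) by (apply sqrt_lt_R0; lra).
  assert (hr2 : r*r = c^2 - 3*b*d) by (apply sqrt_sqrt; lra).
  assert (hrc : r < -c) by (assert (c < 0) by lra; destruct (Rlt_or_le r (-c)); [auto|assert (0<b*d) by nra; nra]).
  assert (hxm : x_m b c d = (-c-r)/b) by reflexivity.
  assert (hxM : x_M b c d = (-c+r)/b) by reflexivity.
  set (xm := x_m b c d) in *. set (xM := x_M b c d) in *.
  assert (xmpos : 0 < xm) by (rewrite hxm; apply Rdiv_lt_0_compat; lra).
  assert (xmM : xm < xM) by (rewrite hxm, hxM; unfold Rdiv; apply Rmult_lt_compat_r;
    [apply Rinv_0_lt_compat; lra | lra]).
  assert (root : b*xm^2+2*c*xm+3*d = 0).
  { rewrite hxm. field_simplify; [|lra]. nra. }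
  set (E := b*xm^2+c*xm+d) in *.
  assert (hE : E * b = r*c + c^2 - 2*b*d).
  { unfold E. rewrite hxm. field_simplify; [|lra]. nra. }
  assert (Eiff : E > 0 <-> c > -2*sb).
  { split; intro h.
    - assert (h1 : r*c + c^2 - 2*b*d > 0) by nra.
      assert (h2 : c^2 < 4*b*d) by nra.
      nra.
    - assert (h2 : c^2 < 4*b*d) by nra.
      assert (h3 : (c^2 - 2*b*d)^2 > (r*c)^2) by nra.
      assert (h4 : c^2 - 2*b*d > - (r*c)) by nra.
      nra. }
  assert (Eb : phi a b c d xm > a <-> E > 0).
  { pose proof (phi_sub a b c d xm xmpos) as P. fold E in P.
    assert (0 < xm^3) by (apply pow_lt; lra).
    split; intro h.
    - assert (E / xm^3 > 0) by lra.
      destruct (Rle_or_lt E 0) as [h'|h']; [|lra].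
      assert (E / xm^3 <= 0); [|lra].
      unfold Rdiv. assert (0 < / xm^3) by (apply Rinv_0_lt_compat; lra). nra.
    - assert (E / xm^3 > 0) by (apply Rdiv_lt_0_compat; lra). lra. }
  split; [|split].
  -
    set (C := 27*a^2*d^2 + 4*d*b^3) in *.
    set (K := 1 + 2*sb + (18*a*b*d + C)/(4*a)) in *.
    assert (hC : 0 < C) by (unfold C; assert (0 < a^2*d^2) by (apply Rmult_lt_0_compat; apply pow_lt; lra); assert (0 < d*b^3) by (apply Rmult_lt_0_compat; [lra|apply pow_lt; lra]); lra).
    assert (hK1 : (18*a*b*d + C)/(4*a) > 0) by (apply Rdiv_lt_0_compat; nra).
    assert (hK2 : 4*a*K > 18*a*b*d + C).
    { unfold K. assert (4*a*((18*a*b*d + C)/(4*a)) = 18*a*b*d+C) by (field; lra). nra. }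
    assert (QK : Qpoly a b d (-K) < 0).
    { unfold Qpoly. fold C. assert (K > 1) by (unfold K; lra).
      assert (hK2' : K^2 > 1) by nra.
      assert (h1 : 4*a*K^3 > (18*a*b*d+C)*K^2) by (replace (4*a*K^3) with ((4*a*K)*K^2) by ring; nra).
      assert (h2 : (18*a*b*d+C)*K^2 >= 18*a*b*d*K + C) by (assert (0 < a*b*d) by (apply Rmult_lt_0_compat; [nra|lra]); assert (K^2 >= K) by nra; assert (0 <= (a*b*d)*(K^2-K)) by (apply Rmult_le_pos; lra); assert (0 <= C*(K^2-1)) by (apply Rmult_le_pos; lra); nra).
      assert (0 <= b^2*(-K)^2) by (apply Rmult_le_pos; [nra| apply pow2_ge_0]).
      replace ((-K)^3) with (-(K^3)) by ring. unfold C in *. nra. }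
    assert (Qs : 0 < Qpoly a b d (-2*sb)).
    { assert (e3 : sb^3 = b*d*sb) by (simpl; nra). unfold Qpoly. replace ((-2*sb)^3) with (-8*sb^3) by ring. replace ((-2*sb)^2) with (4*(sb*sb)) by ring. rewrite e3, hs2. assert (0 < a*b*d*sb) by (repeat apply Rmult_lt_0_compat; lra). unfold C in hC. nra. }
    assert (cont : continuity (Qpoly a b d)).
    { intro x. unfold Qpoly. reg. }
    assert (hKs : -K < -2*sb) by (unfold K; lra).
    destruct (IVT (Qpoly a b d) (-K) (-2*sb) cont hKs QK Qs) as [z [hz1 hz2]].
    assert (z <> -2*sb) by (intro e; rewrite e in hz2; lra).
    assert (z = c_minus) by (apply hcm_unique; lra).
    lra.
  - tauto.
  - intro hc. apply Eiff in hc as Epos.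
    assert (Eeq : E = -(c*xm+2*d)) by (unfold E; lra).
    assert (hxmb : xm*b = -c-r) by (rewrite hxm; field; lra).
    assert (hxMb : xM*b = -c+r) by (rewrite hxM; field; lra).
    assert (hrrc : r*r*c = (c^2-3*b*d)*c) by (rewrite hr2; ring).
    assert (hmain : d*xm*(b*b) - xM*E*(b*b) = b*d*r).
    { replace (d*xm*(b*b)) with (d*b*(xm*b)) by ring.
      replace (xM*E*(b*b)) with ((xM*b)*(E*b)) by ring.
      rewrite hxmb, hxMb, hE. lra. }
    assert (hlt : xM*E < d*xm).
    { assert (0 < b*d*r) by (repeat apply Rmult_lt_0_compat; lra).
      assert (0 < b*b) by nra.
      destruct (Rlt_or_le (xM*E) (d*xm)) as [h|h]; [exact h|].
      assert (0 <= (xM*E - d*xm)*(b*b)) by (apply Rmult_le_pos; lra). lra. }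
    assert (xMpos : 0 < xM) by lra.
    assert (hEeta : E * (d*xm/E) = d*xm) by (field; lra).
    assert (hxMeta : xM < d*xm/E).
    { apply (Rmult_lt_reg_r E); [lra|]. rewrite Rmult_comm with (r1 := d*xm/E). lra. }
    exists (d*xm/E).
    split; [split|split].
    + exact hxMeta.
    + set (eta := d*xm/E) in *.
      assert (etapos : 0 < eta) by lra.
      pose proof (key a b c d xm eta xmpos etapos root) as K. fold E in K.
      rewrite hEeta in K. replace (d*xm - d*xm) with 0 in K by ring.
      replace (- (eta - xm) ^ 2 * 0) with 0 in K by ring.
      assert (0 < xm^3*eta^3) by (apply Rmult_lt_0_compat; apply pow_lt; lra).
      apply Rmult_integral in K. destruct K as [K|K]; lra.
    + intros y hy hphi.
      assert (ypos : 0 < y) by lra.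
      pose proof (key a b c d xm y xmpos ypos root) as K. fold E in K.
      rewrite hphi, Rminus_diag, Rmult_0_l in K.
      assert (0 < (y-xm)^2) by (apply pow_lt; lra).
      assert (hEy : E*y - d*xm = 0).
      { symmetry in K. rewrite <- Ropp_mult_distr_l in K. apply Ropp_eq_0_compat in K.
        rewrite Ropp_involutive in K. apply Rmult_integral in K. destruct K; lra. }
      apply (Rmult_eq_reg_l E); [|lra]. lra.
    + rewrite Eeq. field. lra.
Qed.
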